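(* Let $A$ be any algebra (over a field of characteristic $0$) that is assosymmetric and satisfies $a(bc)=b(ac)$ for all $a,b,c$. Then for all $a,b,c,d\in A$: \[ ((ab)c)d=((ac)b)d, \] \[ d(c(ab))=2d((ab)c)+((ac)d)b-2((ab)d)c, \] \[ d((ac)b)=d((ab)c)+((ac)d)b-((ab)d)c, \] \[ c((ad)b)=d((ac)b). \]
   Context: An algebra is assosymmetric if its associator $(x,y,z)=(xy)z-x(yz)$ is invariant under all permutations of $x,y,z$. This variety is the Koszul dual of the variety of left-symmetric algebras satisfying $(ab)c-(ba)c-(ac)b+(ca)b+(bc)a-(cb)a=0$. *)

(* Defs.v *)
From HB Require Import structures.
From mathcomp Require Import all_boot all_order all_algebra.
Set Implicit Arguments. Unset Strict Implicit. Unset Printing Implicit Defensive.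
Import GRing.Theory.
Local Open Scope ring_scope.

Definition bilinear_mul (K : fieldType) (V : lmodType K) (mul : V -> V -> V) :=
  (forall (a : K) (x y z : V), mul (a *: x + y) z = a *: mul x z + mul y z) /\
  (forall (a : K) (x y z : V), mul x (a *: y + z) = a *: mul x y + mul x z).

Definition associator (K : fieldType) (V : lmodType K) (mul : V -> V -> V)
  (x y z : V) : V := mul (mul x y) z - mul x (mul y z).

Definition assosymmetric (K : fieldType) (V : lmodType K) (mul : V -> V -> V) :=
  forall x y z : V,
    let A := associator mul in
    [/\ A x y z = A y x z, A x y z = A x z y, A x y z = A y z x,
        A x y z = A z x y & A x y z = A z y x].

Definition char0 (K : fieldType) := [pchar K] =i pred0.

(* Main.v *)
Require Import Defs.
From mathcomp Require Import all_boot all_order all_algebra.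
Import GRing.Theory.
Local Open Scope ring_scope.
Set Implicit Arguments. Unset Strict Implicit. Unset Printing Implicit Defensive.
Local Open Scope ring_scope.

Inductive lex := At of nat | Ad of lex & lex | Op of lex | Sc of int & lex | Ze.

Fixpoint leval (K : fieldType) (V : lmodType K) (env : seq V) (e : lex) : V :=
  match e with
  | At n => nth 0 env n
  | Ad x y => leval env x + leval env y
  | Op x => - leval env x
  | Sc k x => (k%:~R : K) *: leval env x
  | Ze => 0
  end.

Fixpoint addl (s t : seq int) : seq int :=
  match s, t with
  | [::], _ => t
  | _, [::] => s
  | x :: s', y :: t' => (x + y) :: addl s' t'
  end.

Fixpoint lnf (e : lex) : seq int :=
  match e with
  | At n => rcons (nseq n 0) 1
  | Ad x y => addl (lnf x) (lnf y)
  | Op x => map (fun z => - z) (lnf x)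
  | Sc k x => map (fun z => k * z) (lnf x)
  | Ze => [::]
  end.

Fixpoint evl (K : fieldType) (V : lmodType K) (env : seq V) (s : seq int) : V :=
  match s with
  | [::] => 0
  | x :: s' => (x%:~R : K) *: head 0 env + evl (behead env) s'
  end.

Lemma evl_addl (K : fieldType) (V : lmodType K) (s t : seq int) (env : seq V) :
  evl env (addl s t) = evl env s + evl env t.
Proof.
elim: s t env => [|x s IH] [|y t] env /=; rewrite ?add0r ?addr0 //.
by rewrite IH intrD scalerDl addrACA.
Qed.

Lemma evl_opp (K : fieldType) (V : lmodType K) (s : seq int) (env : seq V) :
  evl env (map (fun z => - z) s) = - evl env s.
Proof.
elim: s env => [|x s IH] env /=; first by rewrite oppr0.
by rewrite IH intrN scaleNr opprD.
Qed.

Lemma evl_sc (K : fieldType) (V : lmodType K) k (s : seq int) (env : seq V) :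
  evl env (map (fun z => k * z) s) = (k%:~R : K) *: evl env s.
Proof.
elim: s env => [|x s IH] env /=; first by rewrite scaler0.
by rewrite IH intrM scalerDr scalerA.
Qed.

Lemma evl_at (K : fieldType) (V : lmodType K) n (env : seq V) :
  evl env (rcons (nseq n 0) 1) = nth 0 env n.
Proof.
elim: n env => [|n IH] [|x env] /=; rewrite ?scale1r ?addr0 ?scale0r ?add0r ?IH ?nth_nil //.
Qed.

Lemma leval_nf (K : fieldType) (V : lmodType K) (env : seq V) e :
  leval env e = evl env (lnf e).
Proof.
elim: e => [n|x IHx y IHy|x IH|k x IH|] /=.
- by rewrite evl_at.
- by rewrite evl_addl IHx IHy.
- by rewrite evl_opp IH.
- by rewrite evl_sc IH.
- by [].
Qed.

Lemma evl0 (K : fieldType) (V : lmodType K) (env : seq V) s :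
  all (fun z => z == 0) s -> evl env s = 0.
Proof.
elim: s env => [|x s IH] env //= /andP[/eqP -> /IH ->].
by rewrite scale0r addr0.
Qed.

Definition combo (hs : seq (int * lex * lex)) : lex :=
  foldr (fun h acc => Ad (Sc h.1.1 (Ad h.1.2 (Op h.2))) acc) Ze hs.

Definition holds (K : fieldType) (V : lmodType K) (env : seq V)
  (hs : seq (int * lex * lex)) : Prop :=
  foldr (fun h P => leval env h.1.2 = leval env h.2 /\ P) True hs.

Lemma combo0 (K : fieldType) (V : lmodType K) (env : seq V) hs :
  holds env hs -> leval env (combo hs) = 0.
Proof.
elim: hs => [|[[c l] r] hs IH] //= [-> /IH ->].
by rewrite subrr scaler0 addr0.
Qed.

Lemma lmain (K : fieldType) (V : lmodType K) (env : seq V) (N : int)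
  (l r : lex) hs :
  (N%:~R : K) != 0 -> holds env hs ->
  all (fun z => z == 0) (lnf (Ad (Sc N (Ad l (Op r))) (Op (combo hs)))) ->
  leval env l = leval env r.
Proof.
move=> hN hh hz.
have := evl0 env hz; rewrite -leval_nf /= combo0 // oppr0 addr0.
move/eqP; rewrite scaler_eq0 (negbTE hN) /= subr_eq0 => /eqP //.
Qed.

Theorem mainTheorem17 (K : fieldType) (V : lmodType K) (mul : V -> V -> V)
  (hK : char0 K) (hbil : bilinear_mul mul) (hassos : assosymmetric mul)
  (hlc : forall a b c : V, mul a (mul b c) = mul b (mul a c)) :
  forall a b c d : V,
    [/\ mul (mul (mul a b) c) d = mul (mul (mul a c) b) d,
        mul d (mul c (mul a b)) =
          2%:R *: mul d (mul (mul a b) c) + mul (mul (mul a c) d) b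
          - 2%:R *: mul (mul (mul a b) d) c,
        mul d (mul (mul a c) b) =
          mul d (mul (mul a b) c) + mul (mul (mul a c) d) b
          - mul (mul (mul a b) d) c
      & mul c (mul (mul a d) b) = mul d (mul (mul a c) b)].
Proof.
case: hbil => hl hr.
have mulDl : forall x y z, mul (x + y) z = mul x z + mul y z.
  by move=> x y z; have := hl 1 x y z; rewrite !scale1r.
have mulDr : forall x y z, mul x (y + z) = mul x y + mul x z.
  by move=> x y z; have := hr 1 x y z; rewrite !scale1r.
have mul0l : forall z, mul 0 z = 0.
  by move=> z; apply: (addrI (mul 0 z)); rewrite -mulDl !addr0.
have mul0r : forall z, mul z 0 = 0.
  by move=> z; apply: (addrI (mul z 0)); rewrite -mulDr !addr0.
have mulNl : forall x z, mul (- x) z = - mul x z.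
  by move=> x z; apply/eqP; rewrite -addr_eq0 -mulDl addNr mul0l.
have mulNr : forall x z, mul z (- x) = - mul z x.
  by move=> x z; apply/eqP; rewrite -addr_eq0 -mulDr addNr mul0r.
have liftL : forall w p q r s, p - q = r - s -> mul p w - mul q w = mul r w - mul s w.
  by move=> w p q r s h; rewrite -!mulNl -!mulDl h.
have liftR : forall w p q r s, p - q = r - s -> mul w p - mul w q = mul w r - mul w s.
  by move=> w p q r s h; rewrite -!mulNr -!mulDr h.
have asE : forall x y z, let A := associator mul in
    [/\ A x y z = A y x z, A x y z = A x z y, A x y z = A y z x,
        A x y z = A z x y & A x y z = A z y x] := hassos.
have as0 : forall x y z, mul (mul x y) z - mul x (mul y z) = mul (mul y x) z - mul y (mul x z).
  by move=> x y z; case: (asE x y z).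
have as1 : forall x y z, mul (mul x y) z - mul x (mul y z) = mul (mul x z) y - mul x (mul z y).
  by move=> x y z; case: (asE x y z).
have as2 : forall x y z, mul (mul x y) z - mul x (mul y z) = mul (mul y z) x - mul y (mul z x).
  by move=> x y z; case: (asE x y z).
have as3 : forall x y z, mul (mul x y) z - mul x (mul y z) = mul (mul z x) y - mul z (mul x y).
  by move=> x y z; case: (asE x y z).
have as4 : forall x y z, mul (mul x y) z - mul x (mul y z) = mul (mul z y) x - mul z (mul y x).
  by move=> x y z; case: (asE x y z).
have two_nz : ((Posz 2)%:~R : K) != 0.
  by move: (hK 2%N); rewrite !inE /= => /negbT.
move=> a b c d.
pose env := [:: (mul (mul (mul a b) c) d);
    (mul (mul (mul a c) b) d);
    (mul d (mul c (mul a b)));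
    (mul d (mul (mul a b) c));
    (mul (mul (mul a c) d) b);
    (mul (mul (mul a b) d) c);
    (mul d (mul (mul a c) b));
    (mul c (mul (mul a d) b));
    (mul (mul a b) (mul c d));
    (mul (mul c (mul a b)) d);
    (mul c (mul (mul a b) d));
    (mul (mul a (mul b c)) d);
    (mul (mul a (mul c b)) d);
    (mul (mul b (mul a c)) d);
    (mul (mul a c) (mul b d));
    (mul b (mul (mul a c) d));
    (mul (mul a b) (mul d c));
    (mul (mul d (mul a b)) c);
    (mul (mul (mul b a) c) d);
    (mul d (mul a (mul b c)));
    (mul d (mul a (mul c b)));
    (mul (mul (mul c a) b) d);
    (mul (mul (mul c b) a) d);
    (mul (mul c (mul b a)) d);
    (mul d (mul b (mul a c)));
    (mul (mul a (mul b d)) c);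
    (mul (mul (mul a d) b) c);
    (mul (mul a (mul d b)) c);
    (mul c (mul a (mul b d)));
    (mul c (mul (mul b d) a));
    (mul c (mul b (mul d a)));
    (mul (mul b (mul a d)) c);
    (mul (mul b d) (mul a c));
    (mul b (mul d (mul a c)));
    (mul (mul d (mul a c)) b);
    (mul (mul a (mul c d)) b);
    (mul (mul (mul a d) c) b);
    (mul (mul a (mul d c)) b);
    (mul (mul c (mul a d)) b);
    (mul (mul a d) (mul b c));
    (mul b (mul (mul a d) c));
    (mul (mul a d) (mul c b));
    (mul (mul b c) (mul a d));
    (mul b (mul c (mul a d)));
    (mul (mul c b) (mul a d));
    (mul c (mul b (mul a d)));
    (mul (mul b a) (mul c d));
    (mul c (mul (mul b a) d));
    (mul c (mul d (mul b a)));
    (mul d (mul c (mul b a)));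
    (mul (mul (mul b c) a) d);
    (mul a (mul (mul b c) d));
    (mul a (mul d (mul b c)));
    (mul d (mul b (mul c a)));
    (mul (mul (mul b d) a) c);
    (mul a (mul (mul b d) c));
    (mul (mul c a) (mul b d));
    (mul (mul b d) (mul c a));
    (mul b (mul d (mul c a)));
    (mul a (mul d (mul c b)));
    (mul (mul a c) (mul d b));
    (mul c (mul d (mul a b)));
    (mul c (mul a (mul d b)))].
split.
- change (leval env (At 0) = leval env (At 1)).
  exact: (@lmain K V env (Posz 2) (At 0) (At 1) [:: ((Posz 1), (Ad (At 0) (Op (At 8))), (Ad (At 9) (Op (At 10))));
    ((Posz 1), (At 8), (At 10));
    ((Posz 1), (Ad (At 0) (Op (At 11))), (Ad (At 1) (Op (At 12))));
    ((Posz 1), (At 11), (At 13));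
    ((Negz 0), (Ad (At 1) (Op (At 14))), (Ad (At 13) (Op (At 15))));
    ((Negz 0), (At 14), (At 15));
    ((Negz 0), (At 12), (At 9))] two_nz (conj (as0 (mul a b) c d) (conj (hlc (mul a b) c d) (conj (liftL d _ _ _ _ (as1 a b c)) (conj (congr1 (mul^~ d) (hlc a b c)) (conj (as0 (mul a c) b d) (conj (hlc (mul a c) b d) (conj (congr1 (mul^~ d) (hlc a c b)) I))))))) erefl).
- change (leval env (At 2) = leval env (Ad (Ad (Sc (Posz 2) (At 3)) (At 4)) (Op (Sc (Posz 2) (At 5))))).
  exact: (@lmain K V env (Posz 2) (At 2) (Ad (Ad (Sc (Posz 2) (At 3)) (At 4)) (Op (Sc (Posz 2) (At 5)))) [:: ((Negz 2), (Ad (At 0) (Op (At 8))), (Ad (At 9) (Op (At 10))));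
    ((Negz 2), (Ad (At 0) (Op (At 8))), (Ad (At 5) (Op (At 16))));
    ((Posz 1), (Ad (At 0) (Op (At 8))), (Ad (At 17) (Op (At 3))));
    ((Negz 4), (At 8), (At 10));
    ((Posz 4), (Ad (At 0) (Op (At 11))), (Ad (At 18) (Op (At 13))));
    ((Negz 4), (Ad (At 0) (Op (At 11))), (Ad (At 1) (Op (At 12))));
    ((Negz 1), (Ad (At 3) (Op (At 19))), (Ad (At 6) (Op (At 20))));
    ((Posz 2), (Ad (At 0) (Op (At 11))), (Ad (At 21) (Op (At 9))));
    ((Posz 4), (Ad (At 0) (Op (At 11))), (Ad (At 22) (Op (At 23))));
    ((Posz 9), (At 11), (At 13));
    ((Posz 2), (At 19), (At 24));
    ((Posz 3), (At 16), (At 3));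
    ((Posz 1), (Ad (At 5) (Op (At 25))), (Ad (At 26) (Op (At 27))));
    ((Negz 1), (Ad (At 10) (Op (At 28))), (Ad (At 29) (Op (At 30))));
    ((Posz 3), (At 25), (At 31));
    ((Negz 4), (Ad (At 1) (Op (At 14))), (Ad (At 13) (Op (At 15))));
    ((Posz 2), (Ad (At 1) (Op (At 14))), (Ad (At 32) (Op (At 33))));
    ((Negz 1), (Ad (At 1) (Op (At 14))), (Ad (At 34) (Op (At 6))));
    ((Negz 4), (At 14), (At 15));
    ((Negz 1), (At 33), (At 24));
    ((Posz 5), (At 12), (At 9));
    ((Negz 1), (At 20), (At 2));
    ((Negz 1), (Ad (At 4) (Op (At 35))), (Ad (At 36) (Op (At 37))));
    ((Negz 1), (At 35), (At 38));
    ((Negz 2), (Ad (At 26) (Op (At 39))), (Ad (At 31) (Op (At 40))));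
    ((Posz 2), (Ad (At 26) (Op (At 39))), (Ad (At 36) (Op (At 41))));
    ((Posz 4), (Ad (At 26) (Op (At 39))), (Ad (At 42) (Op (At 43))));
    ((Posz 2), (Ad (At 26) (Op (At 39))), (Ad (At 38) (Op (At 7))));
    ((Negz 3), (Ad (At 26) (Op (At 39))), (Ad (At 44) (Op (At 45))));
    ((Negz 2), (At 39), (At 40));
    ((Negz 3), (At 43), (At 45));
    ((Negz 0), (At 27), (At 17));
    ((Posz 2), (At 41), (At 7));
    ((Posz 2), (At 37), (At 34));
    ((Posz 4), (Ad (At 18) (Op (At 46))), (Ad (At 23) (Op (At 47))));
    ((Posz 4), (At 46), (At 47));
    ((Posz 2), (At 48), (At 49));
    ((Posz 4), (Ad (At 50) (Op (At 42))), (Ad (At 11) (Op (At 51))));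
    ((Negz 3), (Ad (At 50) (Op (At 42))), (Ad (At 39) (Op (At 52))));
    ((Posz 4), (At 42), (At 51));
    ((Posz 4), (At 52), (At 19));
    ((Negz 1), (At 53), (At 49));
    ((Posz 2), (Ad (At 54) (Op (At 32))), (Ad (At 25) (Op (At 55))));
    ((Negz 1), (Ad (At 54) (Op (At 32))), (Ad (At 56) (Op (At 28))));
    ((Posz 2), (At 32), (At 55));
    ((Posz 2), (At 30), (At 48));
    ((Posz 2), (At 57), (At 29));
    ((Posz 2), (Ad (At 21) (Op (At 56))), (Ad (At 57) (Op (At 58))));
    ((Negz 1), (At 58), (At 53));
    ((Posz 4), (Ad (At 22) (Op (At 44))), (Ad (At 41) (Op (At 59))));
    ((Negz 3), (At 59), (At 20))] two_nz (conj (as0 (mul a b) c d) (conj (as1 (mul a b) c d) (conj (as3 (mul a b) c d) (conj (hlc (mul a b) c d) (conj (liftL d _ _ _ _ (as0 a b c)) (conj (liftL d _ _ _ _ (as1 a b c)) (conj (liftR d _ _ _ _ (as1 a b c)) (conj (liftL d _ _ _ _ (as3 a b c)) (conj (liftL d _ _ _ _ (as4 a b c)) (conj (congr1 (mul^~ d) (hlc a b c)) (conj (congr1 (mul d) (hlc a b c)) (conj (hlc (mul a b) d c) (conj (liftL c _ _ _ _ (as1 a b d)) (conj (liftR c _ _ _ _ (as2 a b d)) (conj (congr1 (mul^~ c) (hlc a b d)) (conj (as0 (mul a c) b d) (conj (as2 (mul a c) b d) (conj (as3 (mul a c) b d) (conj (hlc (mul a c) b d) (conj (hlc b d (mul a c))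 (conj (congr1 (mul^~ d) (hlc a c b)) (conj (congr1 (mul d) (hlc a c b)) (conj (liftL b _ _ _ _ (as1 a c d)) (conj (congr1 (mul^~ b) (hlc a c d)) (conj (as0 (mul a d) b c) (conj (as1 (mul a d) b c) (conj (as2 (mul a d) b c) (conj (as3 (mul a d) b c) (conj (as4 (mul a d) b c) (conj (hlc (mul a d) b c) (conj (hlc b c (mul a d)) (conj (congr1 (mul^~ c) (hlc a d b)) (conj (hlc (mul a d) c b) (conj (congr1 (mul^~ b) (hlc a d c)) (conj (as0 (mul b a) c d) (conj (hlc (mul b a) c d) (conj (hlc c d (mul b a)) (conj (as0 (mul b c) a d) (conj (as2 (mul b c) a d) (conj (hlc (mul b c) a d) (conj (hlc a d (mul b c)) (conj (congr1 (mul d) (hlc b c a)) (conj (as0 (mul b d) a c) (conj (as4 (mul b d) a c) (conj (hlc (mul b d) a c) (conj (congr1 (mul c) (hlc b d a)) (conj (hlc (mul b d) c a) (conj (as2 (mul c a) b d) (conj (hlc b d (mul c a)) (conj (as2 (mul c b) a d) (conj (hlc a d (mul c b)) I))))))))))))))))))))))))))))))))))))))))))))))))))) erefl).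
- change (leval env (At 6) = leval env (Ad (Ad (At 3) (At 4)) (Op (At 5)))).
  exact: (@lmain K V env (Posz 2) (At 6) (Ad (Ad (At 3) (At 4)) (Op (At 5))) [:: ((Negz 1), (Ad (At 0) (Op (At 8))), (Ad (At 9) (Op (At 10))));
    ((Negz 0), (Ad (At 0) (Op (At 8))), (Ad (At 5) (Op (At 16))));
    ((Posz 1), (Ad (At 0) (Op (At 8))), (Ad (At 17) (Op (At 3))));
    ((Negz 1), (At 8), (At 10));
    ((Posz 2), (Ad (At 0) (Op (At 11))), (Ad (At 18) (Op (At 13))));
    ((Negz 1), (Ad (At 0) (Op (At 11))), (Ad (At 1) (Op (At 12))));
    ((Negz 1), (Ad (At 3) (Op (At 19))), (Ad (At 6) (Op (At 20))));
    ((Posz 2), (Ad (At 0) (Op (At 11))), (Ad (At 22) (Op (At 23))));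
    ((Posz 4), (At 11), (At 13));
    ((Posz 1), (At 16), (At 3));
    ((Posz 1), (Ad (At 5) (Op (At 25))), (Ad (At 26) (Op (At 27))));
    ((Posz 1), (At 25), (At 31));
    ((Negz 1), (Ad (At 1) (Op (At 14))), (Ad (At 13) (Op (At 15))));
    ((Posz 1), (Ad (At 1) (Op (At 14))), (Ad (At 4) (Op (At 60))));
    ((Negz 0), (Ad (At 1) (Op (At 14))), (Ad (At 34) (Op (At 6))));
    ((Negz 1), (At 14), (At 15));
    ((Posz 2), (At 12), (At 9));
    ((Negz 0), (At 60), (At 6));
    ((Negz 0), (Ad (At 4) (Op (At 35))), (Ad (At 36) (Op (At 37))));
    ((Negz 0), (At 35), (At 38));
    ((Negz 0), (Ad (At 26) (Op (At 39))), (Ad (At 31) (Op (At 40))));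
    ((Posz 1), (Ad (At 26) (Op (At 39))), (Ad (At 36) (Op (At 41))));
    ((Posz 2), (Ad (At 26) (Op (At 39))), (Ad (At 42) (Op (At 43))));
    ((Posz 1), (Ad (At 26) (Op (At 39))), (Ad (At 38) (Op (At 7))));
    ((Negz 1), (Ad (At 26) (Op (At 39))), (Ad (At 44) (Op (At 45))));
    ((Negz 0), (At 39), (At 40));
    ((Negz 1), (At 43), (At 45));
    ((Negz 0), (At 27), (At 17));
    ((Posz 1), (At 41), (At 7));
    ((Posz 1), (At 37), (At 34));
    ((Posz 2), (Ad (At 18) (Op (At 46))), (Ad (At 23) (Op (At 47))));
    ((Posz 2), (At 46), (At 47));
    ((Posz 2), (Ad (At 50) (Op (At 42))), (Ad (At 11) (Op (At 51))));
    ((Negz 1), (Ad (At 50) (Op (At 42))), (Ad (At 39) (Op (At 52))));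
    ((Posz 2), (At 42), (At 51));
    ((Posz 2), (At 52), (At 19));
    ((Posz 2), (Ad (At 22) (Op (At 44))), (Ad (At 41) (Op (At 59))));
    ((Negz 1), (At 59), (At 20))] two_nz (conj (as0 (mul a b) c d) (conj (as1 (mul a b) c d) (conj (as3 (mul a b) c d) (conj (hlc (mul a b) c d) (conj (liftL d _ _ _ _ (as0 a b c)) (conj (liftL d _ _ _ _ (as1 a b c)) (conj (liftR d _ _ _ _ (as1 a b c)) (conj (liftL d _ _ _ _ (as4 a b c)) (conj (congr1 (mul^~ d) (hlc a b c)) (conj (hlc (mul a b) d c) (conj (liftL c _ _ _ _ (as1 a b d)) (conj (congr1 (mul^~ c) (hlc a b d)) (conj (as0 (mul a c) b d) (conj (as1 (mul a c) b d) (conj (as3 (mul a c) b d) (conj (hlc (mul a c) b d) (conj (congr1 (mul^~ d) (hlc a c b)) (conj (hlc (mul a c) d b) (conj (liftL b _ _ _ _ (as1 a c d)) (conj (congr1 (mul^~ b) (hlc a c d)) (conj (as0 (mul a d) b c) (conj (as1 (mul a d) b c) (conj (as2 (mul a d) b c) (conj (as3 (mul a d) b c) (conj (as4 (mul a d) b c) (conj (hlc (mul a d) b c) (conj (hlc b c (mul a d)) (conj (congr1 (mul^~ c) (hlc a d b)) (conj (hlc (mul a d) c b) (conj (congr1 (mul^~ b) (hlc a d c)) (conj (as0 (mul b a) c d) (conj (hlc (mul b a) c d) (conj (as0 (mul b c) a d) (conj (as2 (mul b c) a d) (conj (hlc (mul b c) a d) (conj (hlc a d (mul b c)) (conj (as2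 (mul c b) a d) (conj (hlc a d (mul c b)) I)))))))))))))))))))))))))))))))))))))) erefl).
- change (leval env (At 7) = leval env (At 6)).
  exact: (@lmain K V env (Posz 2) (At 7) (At 6) [:: ((Posz 1), (Ad (At 0) (Op (At 8))), (Ad (At 9) (Op (At 10))));
    ((Negz 0), (Ad (At 0) (Op (At 8))), (Ad (At 5) (Op (At 16))));
    ((Negz 0), (Ad (At 0) (Op (At 8))), (Ad (At 17) (Op (At 3))));
    ((Negz 0), (At 8), (At 10));
    ((Posz 2), (At 61), (At 2));
    ((Posz 1), (Ad (At 0) (Op (At 11))), (Ad (At 1) (Op (At 12))));
    ((Posz 2), (Ad (At 3) (Op (At 19))), (Ad (At 6) (Op (At 20))));
    ((Negz 0), (At 11), (At 13));
    ((Posz 1), (At 16), (At 3));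
    ((Negz 0), (Ad (At 5) (Op (At 25))), (Ad (At 26) (Op (At 27))));
    ((Negz 1), (Ad (At 10) (Op (At 28))), (Ad (At 7) (Op (At 62))));
    ((Negz 0), (At 25), (At 31));
    ((Negz 1), (At 28), (At 45));
    ((Posz 1), (Ad (At 1) (Op (At 14))), (Ad (At 13) (Op (At 15))));
    ((Posz 1), (At 14), (At 15));
    ((Negz 0), (At 12), (At 9));
    ((Negz 1), (At 20), (At 2));
    ((Posz 1), (Ad (At 26) (Op (At 39))), (Ad (At 31) (Op (At 40))));
    ((Negz 1), (Ad (At 26) (Op (At 39))), (Ad (At 42) (Op (At 43))));
    ((Posz 1), (At 39), (At 40));
    ((Posz 2), (At 43), (At 45));
    ((Posz 1), (At 27), (At 17));
    ((Posz 2), (At 62), (At 61));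
    ((Negz 1), (Ad (At 50) (Op (At 42))), (Ad (At 11) (Op (At 51))));
    ((Posz 2), (Ad (At 50) (Op (At 42))), (Ad (At 39) (Op (At 52))));
    ((Negz 1), (At 42), (At 51));
    ((Negz 1), (At 52), (At 19))] two_nz (conj (as0 (mul a b) c d) (conj (as1 (mul a b) c d) (conj (as3 (mul a b) c d) (conj (hlc (mul a b) c d) (conj (hlc c d (mul a b)) (conj (liftL d _ _ _ _ (as1 a b c)) (conj (liftR d _ _ _ _ (as1 a b c)) (conj (congr1 (mul^~ d) (hlc a b c)) (conj (hlc (mul a b) d c) (conj (liftL c _ _ _ _ (as1 a b d)) (conj (liftR c _ _ _ _ (as1 a b d)) (conj (congr1 (mul^~ c) (hlc a b d)) (conj (congr1 (mul c) (hlc a b d)) (conj (as0 (mul a c) b d) (conj (hlc (mul a c) b d) (conj (congr1 (mul^~ d) (hlc a c b)) (conj (congr1 (mul d) (hlc a c b)) (conj (as0 (mul a d) b c) (conj (as2 (mul a d) b c) (conj (hlc (mul a d) b c) (conj (hlc b c (mul a d)) (conj (congr1 (mul^~ c) (hlc a d b)) (conj (congr1 (mul c) (hlc a d b)) (conj (as0 (mul b c) a d) (conj (as2 (mul b c) a d) (conj (hlc (mul b c) a d) (conj (hlc a d (mul b c)) I))))))))))))))))))))))))))) erefl).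
Qed.
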